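(* Let $(\mathfrak{g},[\cdot,\cdot]_{\mathfrak{g}})$ be a Leibniz algebra over a field $\mathbf{K}$, $(V;\rho^L,\rho^R)$ a representation, and $T:V\to\mathfrak{g}$ a relative Rota-Baxter operator. Then for every Nijenhuis element $x\in\mathrm{Nij}(T)$, with $\mathfrak{T}=\partial_Tx$, i.e. $\mathfrak{T}(u)=T\rho^L(x)u-[x,Tu]_{\mathfrak{g}}$, the family $T_t=T+t\mathfrak{T}$ is a trivial linear deformation of $T$.
   Context: A Leibniz algebra is a vector space $\mathfrak{g}$ with a bilinear map $[\cdot,\cdot]_{\mathfrak{g}}$ such that $[x,[y,z]_{\mathfrak{g}}]_{\mathfrak{g}}=[[x,y]_{\mathfrak{g}},z]_{\mathfrak{g}}+[y,[x,z]_{\mathfrak{g}}]_{\mathfrak{g}}$. A representation $(V;\rho^L,\rho^R)$ is a vector space $V$ with linear maps $\rho^L,\rho^R:\mathfrak{g}\to\mathfrak{gl}(V)$ with $\rho^L([x,y]_{\mathfrak{g}})=[\rho^L(x),\rho^L(y)]$, $\rho^R([x,y]_{\mathfrak{g}})=[\rho^L(x),\rho^R(y)]$, $\rho^R(y)\rho^L(x)=-\rho^R(y)\rho^R(x)$ (commutators in $\mathfrak{gl}(V)$). $L_xy=[x,y]_{\mathfrak{g}}$. A relative Rota-Baxter operator is a linear $T:V\to\mathfrak{g}$ with $[Tv_1,Tv_2]_{\mathfrak{g}}=T(\rho^L(Tv_1)v_2+\rho^R(Tv_2)v_1)$ for all $v_1,v_2\in V$. A homomorphism from a relative Rota-Baxter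 operator $T'$ to $T$ is a pair of a Leibniz algebra homomorphism $\phi_{\mathfrak{g}}:\mathfrak{g}\to\mathfrak{g}$ and a linear map $\phi_V:V\to V$ with $T\circ\phi_V=\phi_{\mathfrak{g}}\circ T'$, $\phi_V\rho^L(y)u=\rho^L(\phi_{\mathfrak{g}}(y))\phi_V(u)$, $\phi_V\rho^R(y)u=\rho^R(\phi_{\mathfrak{g}}(y))\phi_V(u)$ for all $y\in\mathfrak{g},u\in V$. A linear map $\mathfrak{T}:V\to\mathfrak{g}$ generates a linear deformation $T_t=T+t\mathfrak{T}$ if $T+t\mathfrak{T}$ is a relative Rota-Baxter operator for every $t\in\mathbf{K}$; it is trivial if there is $y\in\mathfrak{g}$ such that for all $t$, $(\mathrm{Id}_{\mathfrak{g}}+tL_y,\mathrm{Id}_V+t\rho^L(y))$ is a homomorphism from $T_t$ to $T$. An element $x\in\mathfrak{g}$ is a Nijenhuis element associated to $T$ if for all $y,z\in\mathfrak{g}$, $u\in V$: $[[x,y]_{\mathfrak{g}},[x,z]_{\mathfrak{g}}]_{\mathfrak{g}}=0$, $\rho^L([x,y]_{\mathfrak{g}})\rho^L(x)=0$, $\rho^R([x,y]_{\mathfrak{g}})\rho^L(x)=0$, and $[x,T\rho^L(x)u-[x,Tu]_{\mathfrak{g}}]_{\mathfrak{g}}=0$. $\mathrm{Nij}(T)$ denotes the set of these. *)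

(* Defs.v *)
From HB Require Import structures.
From mathcomp Require Import all_boot all_algebra.
Set Implicit Arguments. Unset Strict Implicit. Unset Printing Implicit Defensive.
Import GRing.Theory.
Local Open Scope ring_scope.

Section Leibniz.
Variables (K : fieldType) (g V : lmodType K).

Definition is_linear (U W : lmodType K) (f : U -> W) : Prop :=
  forall (a : K) (u v : U), f (a *: u + v) = a *: f u + f v.

Definition is_bilinear (U W X : lmodType K) (f : U -> W -> X) : Prop :=
  (forall w : W, is_linear (fun u => f u w)) /\ (forall u : U, is_linear (f u)).

Definition leibniz_algebra (br : g -> g -> g) : Prop :=
  is_bilinear br /\
  forall x y z, br x (br y z) = br (br x y) z + br y (br x z).

Definition leibniz_rep (br : g -> g -> g) (rhoL rhoR : g -> V -> V) : Prop :=
  [/\ is_bilinear rhoL, is_bilinear rhoR,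
   (forall x y u, rhoL (br x y) u = rhoL x (rhoL y u) - rhoL y (rhoL x u)),
   (forall x y u, rhoR (br x y) u = rhoL x (rhoR y u) - rhoR y (rhoL x u)) &
   (forall x y u, rhoR y (rhoL x u) = - rhoR y (rhoR x u))].

Definition relative_RB (br : g -> g -> g) (rhoL rhoR : g -> V -> V)
  (T : V -> g) : Prop :=
  is_linear T /\
  forall v1 v2, br (T v1) (T v2) = T (rhoL (T v1) v2 + rhoR (T v2) v1).

Definition leibniz_hom (br : g -> g -> g) (phi : g -> g) : Prop :=
  is_linear phi /\ forall x y, phi (br x y) = br (phi x) (phi y).

Definition relative_RB_hom (br : g -> g -> g) (rhoL rhoR : g -> V -> V)
  (T' T : V -> g) (phig : g -> g) (phiV : V -> V) : Prop :=
  [/\ leibniz_hom br phig, is_linear phiV,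
   (forall u, T (phiV u) = phig (T' u)),
   (forall y u, phiV (rhoL y u) = rhoL (phig y) (phiV u)) &
   (forall y u, phiV (rhoR y u) = rhoR (phig y) (phiV u))].

Definition linear_deformation (br : g -> g -> g) (rhoL rhoR : g -> V -> V)
  (T frakT : V -> g) : Prop :=
  is_linear frakT /\
  forall t : K, relative_RB br rhoL rhoR (fun u => T u + t *: frakT u).

Definition trivial_linear_deformation (br : g -> g -> g) (rhoL rhoR : g -> V -> V)
  (T frakT : V -> g) : Prop :=
  linear_deformation br rhoL rhoR T frakT /\
  exists y : g, forall t : K,
    relative_RB_hom br rhoL rhoR (fun u => T u + t *: frakT u) T
      (fun z => z + t *: br y z) (fun u => u + t *: rhoL y u).

Definition nijenhuis_elt (br : g -> g -> g) (rhoL rhoR : g -> V -> V)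
  (T : V -> g) (x : g) : Prop :=
  [/\ (forall y z, br (br x y) (br x z) = 0),
   (forall y u, rhoL (br x y) (rhoL x u) = 0),
   (forall y u, rhoR (br x y) (rhoL x u) = 0) &
   (forall u, br x (T (rhoL x u) - br x (T u)) = 0)].

Definition dT (br : g -> g -> g) (rhoL : g -> V -> V) (T : V -> g) (x : g) : V -> g :=
  fun u => T (rhoL x u) - br x (T u).

End Leibniz.

(* Main.v *)
Require Import Defs.
From HB Require Import structures.
From mathcomp Require Import all_boot all_algebra.
From mathcomp Require Import ring.
Set Implicit Arguments. Unset Strict Implicit. Unset Printing Implicit Defensive.
Import GRing.Theory.
Local Open Scope ring_scope.

(* square-zero extension int ⋉ M, to decide abelian-group identities with ring *)
Definition sqz (M : zmodType) := (int * M)%type.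
HB.instance Definition _ (M : zmodType) := GRing.Zmodule.on (sqz M).
Definition sqz_mul (M : zmodType) (p q : sqz M) : sqz M :=
  (p.1 * q.1, p.2 *~ q.1 + q.2 *~ p.1).
Definition sqz_one (M : zmodType) : sqz M := (1, 0).
Lemma sqz_mulA M : associative (@sqz_mul M).
Proof.
move=> [a x] [b y] [c z]; rewrite /sqz_mul /=; congr (_,_); first by rewrite mulrA.
by rewrite !mulrzDl !mulrzA -!addrA [y *~ c *~ a]mulrzAC [z *~ b *~ a]mulrzAC.
Qed.
Lemma sqz_mulC M : commutative (@sqz_mul M).
Proof. by move=> [a x] [b y]; rewrite /sqz_mul /= mulrC addrC. Qed.
Lemma sqz_mul1 M : left_id (@sqz_one M) (@sqz_mul M).
Proof. by move=> [a x]; rewrite /sqz_mul /= mul1r mul0rz add0r. Qed.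
Lemma sqz_mulD M : left_distributive (@sqz_mul M) +%R.
Proof.
move=> [a x] [b y] [c z]; rewrite /sqz_mul /=; congr (_,_); first by rewrite mulrDl.
by rewrite mulrzDl mulrzDr !addrA; congr (_ + _); rewrite addrAC.
Qed.
Lemma sqz_one_neq0 M : @sqz_one M != 0.
Proof. by []. Qed.
HB.instance Definition _ (M : zmodType) :=
  GRing.Zmodule_isComNzRing.Build (sqz M) (@sqz_mulA M) (@sqz_mulC M)
    (@sqz_mul1 M) (@sqz_mulD M) (@sqz_one_neq0 M).
Definition emb (M : zmodType) (m : M) : sqz M := (0, m).
Lemma emb_zmod M : zmod_morphism (@emb M).
Proof. by move=> x y. Qed.
HB.instance Definition _ (M : zmodType) :=
  GRing.isZmodMorphism.Build M (sqz M) (@emb M) (@emb_zmod M).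
Lemma emb_inj M : injective (@emb M).
Proof. by move=> x y [->]. Qed.


Ltac ac := apply: emb_inj; ring.

Lemma scaleAC (K : fieldType) (V : lmodType K) (a b : K) (v : V) :
  a *: (b *: v) = b *: (a *: v).
Proof. by rewrite !scalerA mulrC. Qed.

Section Lin.
Context (K : fieldType) (U W : lmodType K) (f : U -> W) (h : is_linear f).
Lemma linD u v : f (u + v) = f u + f v.
Proof. by rewrite -[u in LHS]scale1r h scale1r. Qed.
Lemma lin0 : f 0 = 0.
Proof. have e := linD 0 0; rewrite addr0 in e; by apply: (addrI (f 0)); rewrite addr0 -e. Qed.
Lemma linZ a u : f (a *: u) = a *: f u.
Proof. by rewrite -[a *: u]addr0 h lin0 addr0. Qed.
Lemma linN u : f (- u) = - f u.
Proof. by rewrite -scaleN1r linZ scaleN1r. Qed.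
End Lin.

Lemma linear_of (K : fieldType) (U W : lmodType K) (f : U -> W) :
  (forall u v, f (u + v) = f u + f v) -> (forall a u, f (a *: u) = a *: f u) ->
  is_linear f.
Proof. by move=> hD hZ a u v; rewrite hD hZ. Qed.

Section Bil.
Context (K : fieldType) (U W X : lmodType K) (f : U -> W -> X) (h : is_bilinear f).
Lemma bDl p q r : f (p + q) r = f p r + f q r.
Proof. exact: (linD (h.1 r)). Qed.
Lemma bZl a p r : f (a *: p) r = a *: f p r.
Proof. exact: (linZ (h.1 r)). Qed.
Lemma bNl p r : f (- p) r = - f p r.
Proof. exact: (linN (h.1 r)). Qed.
Lemma b0l r : f 0 r = 0.
Proof. exact: (lin0 (h.1 r)). Qed.
Lemma bDr p q r : f r (p + q) = f r p + f r q.
Proof. exact: (linD (h.2 r)). Qed.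
Lemma bZr a p r : f r (a *: p) = a *: f r p.
Proof. exact: (linZ (h.2 r)). Qed.
Lemma bNr p r : f r (- p) = - f r p.
Proof. exact: (linN (h.2 r)). Qed.
Lemma b0r r : f r 0 = 0.
Proof. exact: (lin0 (h.2 r)). Qed.
Lemma bexp t p P q Q :
  f (p + t *: P) (q + t *: Q) = f p q + t *: (f p Q + f P q) + t *: (t *: f P Q).
Proof. rewrite bDl !bDr !bZl !bZr scalerDr; ac. Qed.
Lemma bexpl t p P q : f (p + t *: P) q = f p q + t *: f P q.
Proof. by rewrite bDl bZl. Qed.
Lemma bexpr t p q Q : f p (q + t *: Q) = f p q + t *: f p Q.
Proof. by rewrite bDr bZr. Qed.
End Bil.

Theorem theorem3p8 (K : fieldType) (g V : lmodType K)
  (br : g -> g -> g) (rhoL rhoR : g -> V -> V) (T : V -> g) :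
  leibniz_algebra br ->
  leibniz_rep br rhoL rhoR ->
  relative_RB br rhoL rhoR T ->
  forall x : g, nijenhuis_elt br rhoL rhoR T x ->
  trivial_linear_deformation br rhoL rhoR T (dT br rhoL T x).
Proof.
move=> [Hb Hjac] [HL HR HLbr HRbr _] [HT HRB] x [N1 N2 N3 N4].
have {}Hjac : forall p q r : g, br p (br q r) = br (br p q) r + br q (br p r) := Hjac.
have {}HLbr : forall (p q : g) (u : V), rhoL (br p q) u = rhoL p (rhoL q u) - rhoL q (rhoL p u) := HLbr.
have {}HRbr : forall (p q : g) (u : V), rhoR (br p q) u = rhoL p (rhoR q u) - rhoR q (rhoL p u) := HRbr.
have {}HRB : forall v1 v2, br (T v1) (T v2) = T (rhoL (T v1) v2 + rhoR (T v2) v1) := HRB.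
pose F := dT br rhoL T x.
have FE : forall u, F u = T (rhoL x u) - br x (T u) by [].
have N4' : forall u, br x (F u) = 0 := N4.
have Flin : is_linear F.
  apply: linear_of => [u v|a u]; rewrite !FE ?(linD HT) ?(linZ HT) ?(linD (HL.2 x)) ?(linZ (HL.2 x)) ?(linD HT) ?(linZ HT) ?(bDr Hb) ?(bZr Hb) ?scalerBr; ac.
pose phig := fun (t : K) z => z + t *: br x z.
pose phiV := fun (t : K) u => u + t *: rhoL x u.
pose Tt := fun (t : K) u => T u + t *: F u.
have PGlin : forall t, is_linear (phig t).
  move=> t; apply: linear_of => [u v|a u]; rewrite /phig ?(bDr Hb) ?(bZr Hb) ?scalerDr ?[t *: (a *: _)]scaleAC; ac.
have PVlin : forall t, is_linear (phiV t).
  move=> t; apply: linear_of => [u v|a u]; rewrite /phiV ?(linD (HL.2 x)) ?(linZ (HL.2 x)) ?scalerDr ?[t *: (a *: _)]scaleAC; ac.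
have Ttlin : forall t, is_linear (Tt t).
  move=> t; apply: linear_of => [u v|a u]; rewrite /Tt ?(linD HT) ?(linZ HT) ?(linD Flin) ?(linZ Flin) ?scalerDr ?[t *: (a *: _)]scaleAC; ac.
have H1 : forall t p q, phig t (br p q) = br (phig t p) (phig t q).
  move=> t p q; rewrite /phig (bexp Hb) N1 !scaler0 addr0 Hjac scalerDr; ac.
have H3 : forall t u, T (phiV t u) = phig t (Tt t u).
  move=> t u; rewrite /phig /phiV /Tt (linD HT) (linZ HT) (bexpr (Hb)) N4' !scaler0 addr0 FE.
  rewrite scalerBr; ac.
have H4 : forall t y u, phiV t (rhoL y u) = rhoL (phig t y) (phiV t u).
  move=> t y u; rewrite /phig /phiV (bexp HL) N2 !scaler0 addr0 HLbr scalerDr scalerBr; ac.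
have H5 : forall t y u, phiV t (rhoR y u) = rhoR (phig t y) (phiV t u).
  move=> t y u; rewrite /phig /phiV (bexp HR) N3 !scaler0 addr0 HRbr scalerDr scalerBr; ac.
have J : forall p q r, br (br p q) r = br p (br q r) - br q (br p r).
  by move=> p q r; rewrite Hjac addrK.
have D1 : forall v1 v2, br (T v1) (F v2) + br (F v1) (T v2) =
    T (rhoL (F v1) v2) + T (rhoR (F v2) v1) + F (rhoL (T v1) v2) + F (rhoR (T v2) v1).
  move=> v1 v2; rewrite !FE !(bDr Hb) !(bNr Hb) !(bDl Hb) !(bNl Hb) !(bDl HL) !(bNl HL) !(bDl HR) !(bNl HR).
  rewrite J !HRB HLbr HRbr.
  do 3 rewrite ?(linD HT) ?(linN HT) ?(linD (HL.2 x)) ?(linN (HL.2 x)) ?(bDr Hb) ?(bNr Hb).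
  ac.
have Dt : forall t v1 v2,
    br (Tt t v1) (Tt t v2) - Tt t (rhoL (Tt t v1) v2 + rhoR (Tt t v2) v1) =
    t *: (t *: (br (F v1) (F v2) - (F (rhoL (F v1) v2) + F (rhoR (F v2) v1)))).
  move=> t v1 v2; rewrite /Tt (bexp Hb) (bexpl HL) (bexpl HR) D1 HRB.
  do 2 rewrite ?(linD HT) ?(linZ HT) ?(linD Flin) ?(linZ Flin).
  do 3 rewrite ?scalerDr ?scalerN.
  ac.
have chain : forall t v1 v2,
    phig t (br (Tt t v1) (Tt t v2) - Tt t (rhoL (Tt t v1) v2 + rhoR (Tt t v2) v1)) = 0.
  move=> t v1 v2.
  rewrite (linD (PGlin t)) (linN (PGlin t)) H1 -!H3 (linD (PVlin t)) H4 H5 -!H3 -HRB subrr.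
  by [].
have D2 : forall v1 v2, br (F v1) (F v2) - (F (rhoL (F v1) v2) + F (rhoR (F v2) v1)) = 0.
  move=> v1 v2.
  have bxD : br x (br (F v1) (F v2) - (F (rhoL (F v1) v2) + F (rhoR (F v2) v1))) = 0.
    rewrite (bDr Hb (br (F v1) (F v2))) (bNr Hb _ x) (bDr Hb (F (rhoL (F v1) v2))) !N4'.
    rewrite Hjac !N4' (b0l Hb) (b0r Hb); ac.
  have := chain 1 v1 v2.
  by rewrite Dt !scale1r /phig bxD scaler0 addr0.
split.
  split; first exact: Flin.
  move=> t; split; first exact: (Ttlin t).
  move=> v1 v2; apply/eqP; rewrite -subr_eq0; apply/eqP.
  move: (Dt t v1 v2); rewrite D2 !scaler0 => h; exact: h.
exists x => t; split.
- split; [exact: (PGlin t) | exact: (H1 t)].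
- exact: (PVlin t).
- move=> u; exact: (H3 t u).
- exact: (H4 t).
- exact: (H5 t).
Qed.
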